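(* Let $(X,\ell)$ and $(Y,\ell')$ be filtered vector spaces over a field $\kappa$ such that $\ell(X\setminus\{0\})$ and $\ell'(Y\setminus\{0\})$ are well-ordered subsets of $\mathbb{R}$, and let $\phi\colon X\to Y$ be a $\kappa$-linear isomorphism. Then there is an $\ell$-orthogonal basis $\{v_\alpha\}$ of $X$ such that $\{\phi(v_\alpha)\}$ is an $\ell'$-orthogonal basis of $Y$.
   Context: A filtered vector space over a field $\kappa$ is a pair $(V,\ell)$ with $V$ a $\kappa$-vector space and $\ell\colon V\to\mathbb{R}\cup\{-\infty\}$ such that $\ell(v)=-\infty$ iff $v=0$, $\ell(cv)=\ell(v)$ for $c\in\kappa\setminus\{0\}$, and $\ell(v+w)\le\max\{\ell(v),\ell(w)\}$. A subset $S\subset V\setminus\{0\}$ is $\ell$-orthogonal if $\ell(\sum_{i=1}^n c_iv_i)=\max\{\ell(v_i):c_i\neq0\}$ for all finitely many distinct $v_1,\dots,v_n\in S$ and $c_i\in\kappa$. *)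

(* Defs.v *)
(* vector spaces are MathComp lmodTypes over a fieldType K
   (possibly infinite-dimensional); filtration values live in \bar R. *)
From HB Require Import structures.
From mathcomp Require Import all_boot all_order all_algebra.
From mathcomp Require Import boolp classical_sets reals constructive_ereal.

Set Implicit Arguments.
Unset Strict Implicit.
Unset Printing Implicit Defensive.

Import Order.TTheory GRing.Theory Num.Theory.
Local Open Scope classical_set_scope.
Local Open Scope ring_scope.

Section Filtered.
Variables (R : realType) (K : fieldType) (V : lmodType K).

Definition filtration (l : V -> \bar R) : Prop :=
  [/\ forall v, l v != +oo%E,
      forall v, (l v == -oo%E) = (v == 0),
      forall (c : K) v, c != 0 -> l (c *: v) = l v &
      forall v w, (l (v + w)%R <= Order.max (l v) (l w))%E].

Definition filt_values (l : V -> \bar R) : set R :=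
  [set r | exists v, v != 0 /\ l v = r%:E].

Definition well_ordered (A : set R) : Prop :=
  forall B : set R, B `<=` A -> B !=set0 ->
    exists b, B b /\ forall x, B x -> b <= x.

Definition l_orthogonal (l : V -> \bar R) (S : set V) : Prop :=
  (forall v, S v -> v != 0) /\
  forall (s : seq V) (c : V -> K), uniq s -> (forall v, v \in s -> S v) ->
    l (\sum_(v <- s) c v *: v) = \big[Order.max/-oo%E]_(v <- s | c v != 0) l v.

Definition lin_indep (S : set V) : Prop :=
  forall (s : seq V) (c : V -> K), uniq s -> (forall v, v \in s -> S v) ->
    \sum_(v <- s) c v *: v = 0 -> forall v, v \in s -> c v = 0.

Definition spanning (S : set V) : Prop :=
  forall x : V, exists (s : seq V) (c : V -> K),
    [/\ uniq s, (forall v, v \in s -> S v) & x = \sum_(v <- s) c v *: v].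

Definition is_basis (S : set V) : Prop := lin_indep S /\ spanning S.

End Filtered.

(* Main.v *)
Require Import Defs.
From HB Require Import structures.
From mathcomp Require Import all_boot all_order all_algebra.
From mathcomp Require Import boolp classical_sets reals constructive_ereal.
Import Order.TTheory GRing.Theory Num.Theory.
Local Open Scope classical_set_scope.
Local Open Scope ring_scope.

Set Implicit Arguments.
Unset Strict Implicit.
Unset Printing Implicit Defensive.


Section FiltLemmas.
Variables (R : realType) (K : fieldType) (X : lmodType K).
Variable (l : X -> \bar R).
Hypothesis fl : filtration l.

Lemma fl0 : l 0 = -oo%E.
Proof. by case: fl => _ h _ _; apply/eqP; rewrite h. Qed.

Lemma flZ (c : K) v : c != 0 -> l (c *: v) = l v.
Proof. by case: fl => _ _ h _; apply: h. Qed.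

Lemma flN v : l (- v) = l v.
Proof. by rewrite -scaleN1r flZ // oppr_eq0 oner_eq0. Qed.

Lemma flD v w : (l (v + w) <= Order.max (l v) (l w))%E.
Proof. by case: fl => _ _ _ h; apply: h. Qed.

Lemma flB v w : (l (v - w) <= Order.max (l v) (l w))%E.
Proof. by rewrite -(flN w) flD. Qed.

Lemma fl_neq0 v : v != 0 -> exists r, l v = r%:E.
Proof.
case: fl => hp hm _ _ vn0; move: (hp v) (hm v); rewrite (negbTE vn0).
by case: (l v) => [r| |] //= _ _; exists r.
Qed.

Lemma fl_eqN v : (l v == -oo%E) = (v == 0).
Proof. by case: fl => _ h _ _; apply: h. Qed.

Lemma fl_gtN v : v != 0 -> (-oo < l v)%E.
Proof. by move=> /fl_neq0 [r ->]; rewrite ltNyr. Qed.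

Lemma fl_sum_le (I : eqType) (r : seq I) (P : pred I) (F : I -> X) b :
  (forall i, i \in r -> P i -> (l (F i) <= b)%E) ->
  (l (\sum_(i <- r | P i) F i) <= b)%E.
Proof.
move=> h; rewrite big_seq_cond; apply: (big_ind (fun x => (l x <= b)%E)) => [|x y hx hy|i /andP[ir Pi]].
- by rewrite fl0 leNye.
- by apply: le_trans (flD _ _) _; rewrite ge_max hx hy.
- exact: h.
Qed.

Lemma fl_sum_lt (I : eqType) (r : seq I) (P : pred I) (F : I -> X) b :
  (-oo < b)%E ->
  (forall i, i \in r -> P i -> (l (F i) < b)%E) ->
  (l (\sum_(i <- r | P i) F i) < b)%E.
Proof.
move=> hb h; rewrite big_seq_cond; apply: (big_ind (fun x => (l x < b)%E)) => [|x y hx hy|i /andP[ir Pi]].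
- by rewrite fl0.
- by apply: le_lt_trans (flD _ _) _; rewrite gt_max hx hy.
- exact: h.
Qed.

Lemma fl_strict v w : (l w < l v)%E -> l (v + w) = l v.
Proof.
move=> hlt; apply/eqP; rewrite eq_le; apply/andP; split.
  by apply: le_trans (flD _ _) _; rewrite ge_max lexx (ltW hlt).
have : (l v <= Order.max (l (v + w)) (l w))%E.
  by have := flB (v + w) w; rewrite addrK.
rewrite le_max => /orP[//|]; by rewrite leNgt hlt.
Qed.

End FiltLemmas.

Lemma bigmax_attain (R : realType) (I : eqType) (r : seq I) (P : pred I) (F : I -> \bar R) :
  (\big[Order.max/-oo%E]_(i <- r | P i) F i = -oo%E /\ forall i, i \in r -> ~~ P i)
  \/ exists2 i, (i \in r) && P i & \big[Order.max/-oo%E]_(i <- r | P i) F i = F i.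
Proof.
elim: r => [|h t ih]; first by left; rewrite big_nil.
rewrite big_cons; case: ifPn => Ph.
  case: ih => [[-> hn]|[i /andP[it Pi] ->]].
    right; exists h; first by rewrite inE eqxx Ph.
    by rewrite maxC maxEle leNye.
  right; rewrite maxEle; case: ifP => _.
    by exists i => //; rewrite inE it orbT.
  by exists h => //; rewrite inE eqxx.
case: ih => [[-> hn]|[i /andP[it Pi] ->]].
  left; split => // i; rewrite inE => /predU1P[->//|]; exact: hn.
by right; exists i => //; rewrite inE it orbT Pi.
Qed.



Section Main.
Variables (R : realType) (K : fieldType) (X : lmodType K).

Definition fam (l1 l2 : X -> \bar R) (B : set X) : Prop :=
  (forall v, B v -> v != 0) /\
  forall (sg tau : \bar R) (s : seq X) (c : X -> K) (a b : X), uniq s ->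
    (forall v, v \in s -> [/\ B v, l1 v = sg & l2 v = tau]) ->
    (l1 a < sg)%E -> (l2 a <= tau)%E -> (l1 b <= sg)%E -> (l2 b < tau)%E ->
    \sum_(v <- s) c v *: v = a + b -> forall v, v \in s -> c v = 0.

Lemma fam_swap l1 l2 B : fam l1 l2 B -> fam l2 l1 B.
Proof.
move=> [h0 h]; split => // sg tau s c a b us hs ha1 ha2 hb1 hb2 e.
apply: (h tau sg s c b a us) => //.
  by move=> v /hs [? ? ?].
by rewrite addrC.
Qed.

Lemma fam_orth l1 l2 B : filtration l1 -> filtration l2 ->
  fam l1 l2 B -> l_orthogonal l1 B.
Proof.
move=> f1 f2 [h0 h]; split => // s c us sB.
set x := \sum_(v <- s) c v *: v.
have ex0 : x = \sum_(v <- s | c v != 0) c v *: v.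
  rewrite /x (bigID (fun v => c v != 0)) /= [X in _ + X]big1 ?addr0 //.
  by move=> v; rewrite negbK => /eqP ->; rewrite scale0r.
apply/le_anti/andP; split.
  rewrite ex0; apply: fl_sum_le => // v vs cv.
  by rewrite flZ //; apply: le_bigmax_seq.
set M := \big[Order.max/-oo%E]_(v <- s | c v != 0) l1 v.
have hM : forall v, v \in s -> c v != 0 -> (l1 v <= M)%E.
  by move=> v vs cv; apply: le_bigmax_seq.
case: (bigmax_attain s (fun v => c v != 0) l1) => [[eM _]|[v0 /andP[v0s cv0] eM]].
  by have eM' : M = -oo%E := eM; rewrite eM' leNye.
have {}eM : M = l1 v0 := eM; rewrite eM in hM *.
set sg := l1 v0 in hM *.
have sgN : (-oo < sg)%E by apply: fl_gtN => //; apply: h0; apply: sB.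
rewrite leNgt; apply/negP => hx.
pose P1 v := (c v != 0) && (l1 v == sg).
set N := \big[Order.max/-oo%E]_(v <- s | P1 v) l2 v.
have hN : forall v, v \in s -> P1 v -> (l2 v <= N)%E.
  by move=> v vs cv; apply: le_bigmax_seq.
case: (bigmax_attain s P1 l2) => [[_ hn]|[v1 /andP[v1s P1v1] eN]].
  by have := hn _ v0s; rewrite /P1 cv0 eqxx.
have {}eN : N = l2 v1 := eN; rewrite eN in hN.
set tau := l2 v1 in hN.
have tauN : (-oo < tau)%E by apply: fl_gtN => //; apply: h0; apply: sB.
pose Q v := P1 v && (l2 v == tau).
set S1 := \sum_(v <- s | Q v) c v *: v.
set S2 := \sum_(v <- s | P1 v && (l2 v != tau)) c v *: v.
set S3 := \sum_(v <- s | ~~ P1 v) c v *: v.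
have ex : x = S1 + S2 + S3.
  rewrite /x (bigID P1) /= (bigID (fun v => l2 v == tau)) /=.
  done.
have : c v1 = 0.
  apply: (h sg tau (filter Q s) c (x - S3) (- S2) (filter_uniq _ us)).
  - move=> v; rewrite mem_filter => /andP[/andP[/andP[cv /eqP l1v] /eqP l2v] vs].
    by split => //; exact: sB.
  - apply: le_lt_trans (flB f1 _ _) _; rewrite gt_max hx /=.
    apply: fl_sum_lt => // v vs nP.
    have [cz|cvn] := eqVneq (c v) 0; first by rewrite cz scale0r fl0.
    rewrite flZ // lt_neqAle hM // andbT.
    by move: nP; rewrite /P1 cvn.
  - have -> : x - S3 = S1 + S2 by rewrite ex addrK.
    apply: le_trans (flD f2 _ _) _; rewrite ge_max; apply/andP; split.
      apply: fl_sum_le => // v vs /andP[/andP[cv _] /eqP e].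
      by rewrite flZ // e.
    apply: fl_sum_le => // v vs /andP[P1v _].
    move: (P1v) => /andP[cv _].
    by rewrite flZ // hN.
  - rewrite flN //; apply: fl_sum_le => // v vs /andP[/andP[cv /eqP e] _].
    by rewrite flZ // e.
  - rewrite flN //; apply: fl_sum_lt => // v vs /andP[P1v ne].
    move: (P1v) => /andP[cv _].
    by rewrite flZ // lt_neqAle ne hN.
  - by rewrite big_filter -/S1 ex !addrK.
  - by rewrite mem_filter v1s andbT /Q P1v1 /= eqxx.
by move=> cz; move: P1v1; rewrite /P1 cz eqxx.
Qed.

End Main.



Lemma wf_ind (R : realType) (T : Type) (l : T -> \bar R) (A : set R) :
  well_ordered A -> (forall v, l v = -oo%E \/ exists r, l v = r%:E /\ A r) ->
  forall P : T -> Prop, (forall v, (forall w, (l w < l v)%E -> P w) -> P v) ->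
  forall v, P v.
Proof.
move=> wo hl P IH.
have Pn : forall w, l w = -oo%E -> P w.
  by move=> w e; apply: IH => u; rewrite e ltNge leNye.
move=> v; apply: contrapT => nPv.
pose B := [set r | exists w, l w = r%:E /\ ~ P w].
have BA : B `<=` A.
  move=> r [w [e nP]]; case: (hl w) => [e'|[r' [e' Ar']]].
    by rewrite e' in e.
  by rewrite e in e'; case: e' => ->.
have B0 : B !=set0.
  case: (hl v) => [e|[r [e _]]]; first by exfalso; apply: nPv; exact: Pn.
  by exists r, v.
have [b [[w0 [e0 nP0]] bmin]] := wo B BA B0.
apply: nP0; apply: IH => w hw; apply: contrapT => nPw.
case: (hl w) => [e|[r [e _]]]; first by apply: nPw; exact: Pn.
have : B r by exists w.
move=> /bmin; rewrite leNgt => /negP; apply.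
by rewrite e e0 lte_fin in hw.
Qed.

Section Span.
Variables (K : fieldType) (X : lmodType K).

Definition spanP (B : set X) (x : X) : Prop :=
  exists r : seq (K * X), (forall p, p \in r -> B p.2) /\
    x = \sum_(p <- r) p.1 *: p.2.

Lemma spanP0 B : spanP B 0.
Proof. by exists [::]; rewrite big_nil. Qed.

Lemma spanPD B x y : spanP B x -> spanP B y -> spanP B (x + y).
Proof.
move=> [r1 [h1 ->]] [r2 [h2 ->]]; exists (r1 ++ r2); split; last by rewrite big_cat.
by move=> p; rewrite mem_cat => /orP[/h1|/h2].
Qed.

Lemma spanPZ B k x : spanP B x -> spanP B (k *: x).
Proof.
move=> [r [h ->]]; exists [seq (k * p.1, p.2) | p <- r]; split.
  by move=> p /mapP [q qr ->]; exact: (h q qr).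
by rewrite big_map scaler_sumr; apply: eq_bigr => p _; rewrite scalerA.
Qed.

Lemma spanP_sum B (s : seq X) (c : X -> K) :
  (forall v, v \in s -> B v) -> spanP B (\sum_(v <- s) c v *: v).
Proof.
move=> h; exists [seq (c v, v) | v <- s]; split.
  by move=> p /mapP [q qr ->]; exact: (h q qr).
by rewrite big_map.
Qed.

Lemma spanP_uniq B x : spanP B x -> exists (s : seq X) (c : X -> K),
  [/\ uniq s, (forall v, v \in s -> B v) & x = \sum_(v <- s) c v *: v].
Proof.
move=> [r [h ->]]; elim: r h => [|[k v] r ih] h.
  by exists [::], (fun _ => 0); rewrite !big_nil.
have [|s [c [us sB e]]] := ih; first by move=> p pr; apply: h; rewrite inE pr orbT.
have Bv : B v by apply: (h (k, v)); rewrite inE eqxx.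
rewrite big_cons /= e.
have [vs|vns] := boolP (v \in s).
  exists s, (fun w => if w == v then c w + k else c w); split => //.
  rewrite (big_rem v vs) [in RHS](big_rem v vs) /= eqxx scalerDl.
  rewrite addrCA addrA; congr (_ + _).
  apply: eq_big_seq => w; rewrite mem_rem_uniq // => /andP[wv _].
  by rewrite (negbTE wv).
exists (v :: s), (fun w => if w == v then k else c w); split => //.
- by rewrite /= vns us.
- by move=> w; rewrite inE => /predU1P[->//|]; exact: sB.
rewrite big_cons eqxx; congr (_ + _).
apply: eq_big_seq => w ws; case: eqP => // wv.
by move: ws; rewrite wv (negbTE vns).
Qed.

End Span.



Lemma orth_indep (R : realType) (K : fieldType) (X : lmodType K) (l : X -> \bar R) B :
  filtration l -> l_orthogonal l B -> lin_indep B.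
Proof.
move=> fl [h0 h] s c us sB e v vs; apply/eqP; apply: contraT => cv.
have := h s c us sB; rewrite e fl0 // => eM.
have : (l v <= \big[Order.max/-oo%E]_(w <- s | (c w != 0)%R) l w)%E.
  by apply: le_bigmax_seq.
rewrite -eM leeNy_eq fl_eqN // (negbTE (h0 v (sB v vs))) //.
Qed.

Section Main2.
Variables (R : realType) (K : fieldType) (X : lmodType K) (l1 l2 : X -> \bar R).
Hypotheses (f1 : filtration l1) (f2 : filtration l2).
Variables (A1 A2 : set R).
Hypotheses (wo1 : well_ordered A1) (wo2 : well_ordered A2).
Hypothesis (h1 : forall v, l1 v = -oo%E \/ exists r, l1 v = r%:E /\ A1 r).
Hypothesis (h2 : forall v, l2 v = -oo%E \/ exists r, l2 v = r%:E /\ A2 r).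

Lemma chain_fin (F : set (set X)) : total_on F subset ->
  forall s : seq X, (forall v, v \in s -> (\bigcup_(Y in F) Y) v) ->
  s = [::] \/ exists2 Y, F Y & forall v, v \in s -> Y v.
Proof.
move=> tot; elim => [|h t ih] hs; first by left.
right; have [Y0 FY0 Y0h] := hs h (mem_head _ _).
case: ih => [|->|[Y1 FY1 Y1t]].
- by move=> v vt; apply: hs; rewrite inE vt orbT.
- by exists Y0 => // v; rewrite inE => /eqP ->.
case: (tot _ _ FY0 FY1) => sub.
  exists Y1 => // v; rewrite inE => /predU1P[->|]; [exact: sub | exact: Y1t].
exists Y0 => // v; rewrite inE => /predU1P[->//|/Y1t]; exact: sub.
Qed.

Lemma fam_chain (F : set (set X)) : F `<=` fam l1 l2 -> total_on F subset ->
  fam l1 l2 (\bigcup_(Y in F) Y).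
Proof.
move=> FP tot; split.
  by move=> v [Y FY Yv]; exact: (FP Y FY).1.
move=> sg tau s c a b us hs ha1 ha2 hb1 hb2 e.
case: (chain_fin tot (s := s)) => [v /hs []//|->//|[Y FY sY]].
apply: (FP Y FY).2 us _ ha1 ha2 hb1 hb2 e.
by move=> v vs; have [_ ? ?] := hs v vs; split => //; exact: sY.
Qed.

Definition rep (A : set X) (u : X) : Prop :=
  exists (s : seq X) (c : X -> K) (a b : X), uniq s /\
    (forall w, w \in s -> [/\ A w, l1 w = l1 u & l2 w = l2 u]) /\
    (l1 a < l1 u)%E /\ (l2 a <= l2 u)%E /\ (l1 b <= l1 u)%E /\ (l2 b < l2 u)%E /\
    u = \sum_(w <- s) c w *: w + a + b.

Lemma fam_ext A u : fam l1 l2 A -> u != 0 -> ~ rep A u ->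
  fam l1 l2 (A `|` [set u]).
Proof.
move=> [h0 h] un0 nrep; split.
  by move=> v [/h0 //|->].
move=> sg tau s c a b us hs ha1 ha2 hb1 hb2 e.
have [/andP[uis cu]|hu] := boolP ((u \in s) && (c u != 0)).
  exfalso; apply: nrep.
  have [_ l1u l2u] := hs u uis; subst sg tau.
  exists (rem u s), (fun w => - (c u)^-1 * c w), ((c u)^-1 *: a), ((c u)^-1 *: b).
  have cui : (c u)^-1 != 0 by rewrite invr_eq0.
  split; first exact: rem_uniq.
  split.
    move=> w; rewrite mem_rem_uniq // => /andP[wu ws].
    have [[Aw|wu'] ? ?] := hs w ws; last by rewrite wu' eqxx in wu.
    by split.
  rewrite !flZ //; do 4 (split => //).
  rewrite (big_rem u uis) /= in e.
  have eu : c u *: u = a + b - \sum_(y <- rem u s) c y *: y by rewrite -e addrK.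
  have cu0 := cu.
  rewrite -[LHS]scale1r -(mulVf cu0) -scalerA eu scalerBr scalerDr scaler_sumr.
  have -> : \sum_(w <- rem u s) (- (c u)^-1 * c w) *: w =
            - \sum_(w <- rem u s) (c u)^-1 *: (c w *: w).
    by rewrite -sumrN; apply: eq_bigr => w _; rewrite mulNr scaleNr scalerA.
  by rewrite addrC addrA.
pose s' := filter (predC1 u) s.
have e' : \sum_(v <- s') c v *: v = a + b.
  rewrite big_filter -e [in RHS](bigID (predC1 u)) /=.
  rewrite [X in _ = _ + X]big1_seq ?addr0 //.
  move=> w /andP[/negPn/eqP wu ws]; subst w.
  by move: hu; rewrite ws /= negbK => /eqP ->; rewrite scale0r.
have H := h sg tau s' c a b (filter_uniq _ us).
move=> v vs; have [vu|vu] := eqVneq v u.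
  by subst v; move: hu; rewrite vs /= negbK => /eqP.
have Hs : forall w, w \in s' -> [/\ A w, l1 w = sg & l2 w = tau].
  move=> w; rewrite mem_filter => /andP[/= wu ws].
  have [[Aw|wu'] ? ?] := hs w ws; last by rewrite wu' eqxx in wu.
  by split.
by apply: (H Hs ha1 ha2 hb1 hb2 e' v); rewrite mem_filter /= vu.
Qed.

Lemma max_span A : fam l1 l2 A -> (forall B, A `<` B -> ~ fam l1 l2 B) ->
  forall v, spanP A v.
Proof.
move=> fA maxA.
apply: (wf_ind wo1 h1) => v IH1.
suff : forall u, (l1 u <= l1 v)%E -> spanP A u by apply; exact: lexx.
apply: (wf_ind wo2 h2) => u IH2 hu.
move: hu; rewrite le_eqVlt => /orP[/eqP eq|]; last exact: IH1.
have [Au|nAu] := pselect (A u).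
  by exists [:: (1, u)]; split; [move=> p; rewrite inE => /eqP ->|rewrite big_seq1 scale1r].
have [->|un0] := eqVneq u 0; first exact: spanP0.
have [[s [c [a [b [us [hs [ha1 [ha2 [hb1 [hb2 ->]]]]]]]]]]|nr] := pselect (rep A u).
  apply: spanPD; first apply: spanPD.
  - by apply: spanP_sum => w /hs [].
  - by apply: IH1; rewrite -eq.
  - by apply: IH2 => //; rewrite -eq.
exfalso; apply: (maxA (A `|` [set u])); last exact: fam_ext.
split; first exact: subsetUl.
by move=> sub; apply: nAu; apply: sub; right.
Qed.

Lemma main_X : exists B : set X,
  [/\ is_basis B, l_orthogonal l1 B & l_orthogonal l2 B].
Proof.
have [A [fA maxA]] := Zorn_bigcup fam_chain.
have o1 : l_orthogonal l1 A by exact: fam_orth fA.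
have o2 : l_orthogonal l2 A by apply: fam_orth (fam_swap fA).
exists A; split => //; split; first exact: orth_indep o1.
by move=> x; apply: spanP_uniq; exact: max_span.
Qed.

End Main2.


Unset Implicit Arguments.
Set Strict Implicit.

Theorem proposition3p19 (R : realType) (K : fieldType) (X Y : lmodType K)
    (l : X -> \bar R) (l' : Y -> \bar R) (phi : {linear X -> Y}) :
  filtration l -> filtration l' ->
  well_ordered (filt_values l) -> well_ordered (filt_values l') ->
  bijective phi ->
  exists B : set X,
    [/\ is_basis B, l_orthogonal l B,
        is_basis (phi @` B) & l_orthogonal l' (phi @` B)].
Proof.
move=> fl fl' wo wo' [g gK Kg].
have inj : injective phi := can_inj gK.
pose l2 := fun x => l' (phi x).
have phi0 : forall x, (phi x == 0) = (x == 0).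
  move=> x; apply/eqP/eqP => [h|->]; last exact: raddf0.
  by apply: inj; rewrite h raddf0.
have f2 : filtration l2.
  split.
  - by move=> v; case: fl' => hp _ _ _; exact: hp.
  - by move=> v; rewrite /l2 fl_eqN // phi0.
  - by move=> c v cn; rewrite /l2 linearZ /= flZ.
  - by move=> v w; rewrite /l2 linearD; exact: flD.
have h1 : forall v, l v = -oo%E \/ exists r, l v = r%:E /\ filt_values l r.
  move=> v; have [->|vn] := eqVneq v 0; first by left; rewrite fl0.
  by right; have [r e] := fl_neq0 fl vn; exists r; split => //; exists v.
have h2 : forall v, l2 v = -oo%E \/ exists r, l2 v = r%:E /\ filt_values l' r.
  move=> v; have [->|vn] := eqVneq v 0; first by left; rewrite /l2 raddf0 fl0.
  have pvn : phi v != 0 by rewrite phi0.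
  by right; have [r e] := fl_neq0 fl' pvn; exists r; split => //; exists (phi v).
have [B [[indB spB] o1 o2]] := main_X fl f2 wo wo' h1 h2.
have transfer : forall s : seq Y, uniq s -> (forall y, y \in s -> (phi @` B) y) ->
    exists s0 : seq X, [/\ s = map phi s0, uniq s0 & forall x, x \in s0 -> B x].
  move=> s us sB; exists (map g s); split.
  - by rewrite -map_comp (eq_map Kg) map_id.
  - by rewrite map_inj_uniq //; exact: can_inj Kg.
  - by move=> x /mapP [y /sB [b Bb <-] ->]; rewrite gK.
have o' : l_orthogonal l' (phi @` B).
  split.
    by move=> _ [b Bb <-]; rewrite phi0; exact: o1.1.
  move=> s c us sB; have [s0 [es us0 sB0]] := transfer s us sB.
  rewrite es !big_map.
  have -> : \sum_(x <- s0) c (phi x) *: phi x = phi (\sum_(x <- s0) c (phi x) *: x).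
    by rewrite raddf_sum; apply: eq_bigr => x _; rewrite [RHS]linearZ.
  exact: (o2.2 s0 (fun x => c (phi x)) us0 sB0).
exists B; split => //; split => //.
- exact: orth_indep o'.
- move=> y; have [s0 [c [us0 sB0 e]]] := spB (g y).
  exists (map phi s0), (fun y' => c (g y')); split.
  + by rewrite map_inj_uniq.
  + by move=> y' /mapP [x xs ->]; exists x => //; exact: sB0.
  + rewrite big_map -{1}(Kg y) e raddf_sum; apply: eq_bigr => x _.
    by rewrite [LHS]linearZ /= gK.
Qed.
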